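(* Let $\gamma,\lambda\in\mathbb{C}$ and let $\phi:\mathbb{Z}^2\to\mathbb{C}$ be a (generic, nonvanishing) solution of \[ \frac{\big(\gamma\widetilde{\overline\phi}+\lambda\phi\big)\big(\overline\phi-\gamma\widetilde\phi\big)}{\big(\widetilde{\overline\phi}-\overline\phi\big)\big(\widetilde\phi-\phi\big)}=1-\gamma^2. \] Then \[ u=\frac{\phi-\widetilde\phi}{\gamma\phi-\overline\phi},\qquad v=\frac{\overline\phi}{\phi} \] satisfy respectively the lattice sine-Gordon equation $\frac{\widetilde{\overline u}}{u}=\frac{(\gamma\widetilde u-1)(\gamma-\overline u)}{(\gamma-\widetilde u)(\gamma\overline u-1)}$ and the equation \[ \begin{aligned} &\gamma^2\big(v-\widetilde{\overline v}\big)\big(\overline v-\widetilde v\big)\big(\lambda+v\overline v\big)\big(\lambda+\widetilde v\widetilde{\overline v}\big)-(1-\gamma^2)(\gamma^2-\lambda)\big(v\overline v-\widetilde v\widetilde{\overline v}\big)^2\\ &\quad+\gamma(1-\gamma^2)\big(v\overline v-\widetilde v\widetilde{\overline v}\big)\Big(\big(\lambda+v\overline v\big)\big(\widetilde v+\widetilde{\overline v}\big)-\big(v+\overline v\big)\big(\lambda+\widetilde v\widetilde{\overline v}\big)\Big)=0. \end{aligned} \]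
   Context: Shift notation: for $f:\mathbb{Z}^2\to\mathbb{C}$, $f=f_{l,m}$, $\overline f=f_{l+1,m}$, $\widetilde f=f_{l,m+1}$, $\widetilde{\overline f}=f_{l+1,m+1}$. *)

(* Defs.v *)
From mathcomp Require Import all_boot all_algebra.
From mathcomp Require Export complex.
From mathcomp Require Import reals Rstruct.
Set Implicit Arguments. Unset Strict Implicit. Unset Printing Implicit Defensive.
Import GRing.Theory.
Local Open Scope ring_scope.

Definition C : numClosedFieldType := (Rdefinitions.R[i])%type.

(* Lattice shifts on functions Z^2 -> C:
   f = f_{l,m}, fb = f_{l+1,m} (overline), ft = f_{l,m+1} (tilde),
   ftb = f_{l+1,m+1}. *)
Definition sh1 (f : int -> int -> C) : int -> int -> C := fun l m => f (l + 1) m.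
Definition sh2 (f : int -> int -> C) : int -> int -> C := fun l m => f l (m + 1).

Definition phi_eq (g lam : C) (phi : int -> int -> C) (l m : int) : Prop :=
  let p := phi l m in let pb := sh1 phi l m in
  let pt := sh2 phi l m in let ptb := sh1 (sh2 phi) l m in
  (g * ptb + lam * p) * (pb - g * pt) / ((ptb - pb) * (pt - p)) = 1 - g ^+ 2.

Definition u_of (g : C) (phi : int -> int -> C) : int -> int -> C :=
  fun l m => (phi l m - sh2 phi l m) / (g * phi l m - sh1 phi l m).

Definition v_of (phi : int -> int -> C) : int -> int -> C :=
  fun l m => sh1 phi l m / phi l m.

Definition sG_eq (g : C) (u : int -> int -> C) (l m : int) : Prop :=
  let x := u l m in let xb := sh1 u l m in
  let xt := sh2 u l m in let xtb := sh1 (sh2 u) l m in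
  xtb / x = (g * xt - 1) * (g - xb) / ((g - xt) * (g * xb - 1)).

Definition v_eq (g lam : C) (v : int -> int -> C) (l m : int) : Prop :=
  let x := v l m in let xb := sh1 v l m in
  let xt := sh2 v l m in let xtb := sh1 (sh2 v) l m in
  g ^+ 2 * (x - xtb) * (xb - xt) * (lam + x * xb) * (lam + xt * xtb)
  - (1 - g ^+ 2) * (g ^+ 2 - lam) * (x * xb - xt * xtb) ^+ 2
  + g * (1 - g ^+ 2) * (x * xb - xt * xtb)
      * ((lam + x * xb) * (xt + xtb) - (x + xb) * (lam + xt * xtb)) = 0.

(* Main.v *)
Require Import Defs.
From mathcomp Require Import all_boot all_algebra.
From mathcomp Require Import ring.
Import GRing.Theory.
Local Open Scope ring_scope.
Ltac fld := field; (repeat (apply/andP; split)); try assumption.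

Lemma lin {F : fieldType} {g lam p pb pt ptb : F} : ptb - pb != 0 -> pt - p != 0 ->
  (g*ptb + lam*p)*(pb - g*pt)/((ptb-pb)*(pt-p)) = 1 - g^+2 ->
  ptb*(g*(g*p-pb) - (p-pt)) = lam*p*(pb-g*pt) - (1-g^+2)*pb*(p-pt).
Proof.
move=> h1 h2 E.
have E' : (g*ptb+lam*p)*(pb-g*pt) - (1-g^+2)*((ptb-pb)*(pt-p)) = 0.
  by rewrite -E; fld.
apply/eqP; rewrite -subr_eq0; apply/eqP.
rewrite -[RHS]oppr0 -E'; ring.
Qed.

Lemma sG_core {F : fieldType} {g lam a b c d e f h k : F} :
  g*a - b != 0 -> g*b - e != 0 -> g*c - d != 0 -> g*d - f != 0 ->
  (a - c)/(g*a-b) != 0 ->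
  g - (b-d)/(g*b-e) != 0 -> g - (c-h)/(g*c-d) != 0 ->
  g * ((b-d)/(g*b-e)) - 1 != 0 ->
  g * ((a-c)/(g*a-b)) - 1 != 0 -> a != 0 ->
  d*(g*(g*a-b) - (a-c)) = lam*a*(b-g*c) - (1-g^+2)*b*(a-c) ->
  f*(g*(g*b-e) - (b-d)) = lam*b*(e-g*d) - (1-g^+2)*e*(b-d) ->
  k*(g*(g*c-d) - (c-h)) = lam*c*(d-g*h) - (1-g^+2)*d*(c-h) ->
  ((d-k)/(g*d-f)) / ((a-c)/(g*a-b)) =
   (g*((c-h)/(g*c-d)) - 1)*(g - (b-d)/(g*b-e)) /
   ((g - (c-h)/(g*c-d))*(g*((b-d)/(g*b-e)) - 1)).
Proof.
move=> A00 A10 A01 A11 U0 S10 S01 T10 T00 a0 E00 E10 E01.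
have ac : a - c != 0 by move: U0; rewrite mulf_eq0 negb_or => /andP[].
have Df : g*(g*b-e) - (b-d) != 0.
  have -> : g*(g*b-e) - (b-d) = (g - (b-d)/(g*b-e)) * (g*b-e) by fld.
  exact: mulf_neq0.
have Dk : g*(g*c-d) - (c-h) != 0.
  have -> : g*(g*c-d) - (c-h) = (g - (c-h)/(g*c-d)) * (g*c-d) by fld.
  exact: mulf_neq0.
have ed : e - g*d != 0.
  have -> : e - g*d = (g * ((b-d)/(g*b-e)) - 1) * (g*b-e) by fld.
  exact: mulf_neq0.
have bgc : b - g*c != 0.
  have -> : b - g*c = (g * ((a-c)/(g*a-b)) - 1) * (g*a-b) by fld.
  exact: mulf_neq0.
have -> : ((d-k)/(g*d-f)) / ((a-c)/(g*a-b)) = (d-k)*(g*a-b)/((g*d-f)*(a-c)) by fld.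
have -> : (g*((c-h)/(g*c-d)) - 1)*(g - (b-d)/(g*b-e)) /
   ((g - (c-h)/(g*c-d))*(g*((b-d)/(g*b-e)) - 1)) =
   (d - g*h)*(g*(g*b-e) - (b-d)) / ((g*(g*c-d) - (c-h))*(e - g*d)) by fld.
apply/eqP; rewrite eqr_div ?mulf_neq0 //; apply/eqP.
have Ek : k = (lam*c*(d-g*h) - (1-g^+2)*d*(c-h)) / (g*(g*c-d) - (c-h)).
  by rewrite -E01; fld.
have Ef : f = (lam*b*(e-g*d) - (1-g^+2)*e*(b-d)) / (g*(g*b-e) - (b-d)).
  by rewrite -E10; fld.
have El : lam = (d*(g*(g*a-b) - (a-c)) + (1-g^+2)*b*(a-c)) / (a*(b-g*c)).
  rewrite E00; fld; move: M; rewrite mulf_eq0 negb_or => /andP[] //.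
rewrite Ek Ef El; fld.
Qed.

Lemma v_core {F : fieldType} {g lam a b c d e f : F} :
  g*a - b != 0 -> g*b - e != 0 ->
  g - (b-d)/(g*b-e) != 0 ->
  g * ((a-c)/(g*a-b)) - 1 != 0 -> a != 0 -> b != 0 -> c != 0 -> d != 0 ->
  d*(g*(g*a-b) - (a-c)) = lam*a*(b-g*c) - (1-g^+2)*b*(a-c) ->
  f*(g*(g*b-e) - (b-d)) = lam*b*(e-g*d) - (1-g^+2)*e*(b-d) ->
  let x := b/a in let xb := e/b in let xt := d/c in let xtb := f/d in
  g ^+ 2 * (x - xtb) * (xb - xt) * (lam + x * xb) * (lam + xt * xtb)
  - (1 - g ^+ 2) * (g ^+ 2 - lam) * (x * xb - xt * xtb) ^+ 2
  + g * (1 - g ^+ 2) * (x * xb - xt * xtb)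
      * ((lam + x * xb) * (xt + xtb) - (x + xb) * (lam + xt * xtb)) = 0.
Proof.
move=> A00 A10 S10 T00 a0 b0 c0 d0 E00 E10 x xb xt xtb.
have Df : g*(g*b-e) - (b-d) != 0.
  have -> : g*(g*b-e) - (b-d) = (g - (b-d)/(g*b-e)) * (g*b-e) by fld.
  exact: mulf_neq0.
have bgc : b - g*c != 0.
  have -> : b - g*c = (g * ((a-c)/(g*a-b)) - 1) * (g*a-b) by fld.
  exact: mulf_neq0.
have Ef : f = (lam*b*(e-g*d) - (1-g^+2)*e*(b-d)) / (g*(g*b-e) - (b-d)).
  by rewrite -E10; fld.
have El : lam = (d*(g*(g*a-b) - (a-c)) + (1-g^+2)*b*(a-c)) / (a*(b-g*c)).
  rewrite E00; fld.
rewrite /x /xb /xt /xtb Ef El; fld.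
Qed.

Theorem mainTheorem12 (g lam : C) (phi : int -> int -> C)
  (* genericity: phi nonvanishing and all denominators nonzero *)
  (Hphi0 : forall l m, phi l m != 0)
  (Hd1 : forall l m, sh1 (sh2 phi) l m - sh1 phi l m != 0)
  (Hd2 : forall l m, sh2 phi l m - phi l m != 0)
  (Hdu : forall l m, g * phi l m - sh1 phi l m != 0)
  (Hu0 : forall l m, u_of g phi l m != 0)
  (Hs1 : forall l m, g - u_of g phi l m != 0)
  (Hs2 : forall l m, g * u_of g phi l m - 1 != 0)
  (Heq : forall l m, phi_eq g lam phi l m) :
  (forall l m, sG_eq g (u_of g phi) l m) /\
  (forall l m, v_eq g lam (v_of phi) l m).
Proof.
have L : forall l m, _ := fun l m => lin (Hd1 l m) (Hd2 l m) (Heq l m).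
split=> l m.
- rewrite /sG_eq /u_of /sh1 /sh2.
  move: (L l m) (L (l+1) m) (L l (m+1)) (Hdu l m) (Hdu (l+1) m) (Hdu l (m+1)) (Hdu (l+1) (m+1))
     (Hu0 l m) (Hs1 (l+1) m) (Hs1 l (m+1)) (Hs2 (l+1) m) (Hs2 l m) (Hphi0 l m).
  rewrite /u_of /sh1 /sh2.
  move: (phi l m) (phi (l+1) m) (phi l (m+1)) (phi (l+1) (m+1)) (phi (l+1+1) m)
        (phi (l+1+1) (m+1)) (phi l (m+1+1)) (phi (l+1) (m+1+1)) => a b c d e f h k.
  move=> E00 E10 E01 A00 A10 A01 A11 U0 S10 S01 T10 T00 a0.
  exact: (sG_core A00 A10 A01 A11 U0 S10 S01 T10 T00 a0 E00 E10 E01).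
- rewrite /v_eq /v_of /sh1 /sh2.
  move: (L l m) (L (l+1) m) (Hdu l m) (Hdu (l+1) m) (Hs1 (l+1) m) (Hs2 l m) (Hphi0 l m)
     (Hphi0 (l+1) m) (Hphi0 l (m+1)) (Hphi0 (l+1) (m+1)).
  rewrite /u_of /sh1 /sh2.
  move: (phi l m) (phi (l+1) m) (phi l (m+1)) (phi (l+1) (m+1)) (phi (l+1+1) m)
        (phi (l+1+1) (m+1)) => a b c d e f.
  move=> E00 E10 A00 A10 S10 T00 a0 b0 c0 d0.
  exact: (v_core A00 A10 S10 T00 a0 b0 c0 d0 E00 E10).
Qed.
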